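(* For a word $\tau=(a_0,\ldots,a_{L-1})$ of positive integers define its carry constant $C(\tau)=\sum_{j=0}^{L-1}3^{L-1-j}2^{a_0+\cdots+a_{j-1}}$. Let $\sigma=(k_0,\ldots,k_{\ell-1})$ be a word of positive integers, let $C_\ell=C(\sigma)$, and for $1\le s\le\ell-1$ let $\sigma^{\langle s\rangle}=(k_s,k_{s+1},\ldots,k_{\ell-1},k_0,\ldots,k_{s-1})$ be its cyclic rotation starting at index $s$, with $C^{\langle s\rangle}=C(\sigma^{\langle s\rangle})$. Let $m\ge 1$ and suppose $\delta_s:=v_2\bigl(C^{\langle s\rangle}-C_\ell\bigr)\ge m$. Let $r$ be the largest integer with $0\le r\le\ell$ such that $\sum_{j=0}^{r-1}k_j<m$. Then $k_j=k_{(j+s)\bmod\ell}$ for all $0\le j<r$.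
   Context: $v_2$ is the $2$-adic valuation, with $v_2(0)=+\infty$. Empty sums are $0$. *)

(* Defs.v *)
From mathcomp Require Import all_boot all_order all_algebra.
Set Implicit Arguments. Unset Strict Implicit. Unset Printing Implicit Defensive.
Import Order.TTheory GRing.Theory Num.Theory.

Definition carry (tau : seq nat) : nat :=
  \sum_(j < size tau) 3 ^ (size tau - 1 - j) * 2 ^ (\sum_(i < j) nth 0 tau i).

(* "v_2(x) >= m" with the convention v_2(0) = +oo. *)
Definition v2_ge (x : int) (m : nat) : Prop :=
  x = 0%R \/ (m <= logn 2 `|x|%N)%N.

(* Main.v *)
Require Import Defs.
From mathcomp Require Import all_boot all_order all_algebra.
From mathcomp Require Import zify.

Lemma sum_take (s : seq nat) r : \sum_(j < r) nth 0 s j = sumn (take r s).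
Proof.
elim: s r => [|a s IH] [|r] /=; rewrite ?big_ord0 //.
  by rewrite big1 // => i _; rewrite nth_nil.
by rewrite big_ord_recl /= IH.
Qed.

Lemma carry_cons a t : carry (a :: t) = 3 ^ size t + 2 ^ a * carry t.
Proof.
rewrite /carry /= big_ord_recl /= big_ord0 subn0 subn1 /= muln1; congr (_ + _).
rewrite big_distrr /=; apply: eq_bigr => i _.
rewrite /bump /= add1n subn1 /= big_ord_recl /= expnD.
have -> : (size t).-1 - i = size t - i.+1 by lia.
rewrite mulnCA; do 3 congr (_ * _).
Qed.

Lemma carry_odd t : all (fun k => 0 < k) t -> t != [::] -> odd (carry t).
Proof.
case: t => [|a t] //= /andP[Ha _] _.
rewrite carry_cons oddD oddX /= oddM oddX.
by case: a Ha => [|a] //= _; rewrite orbT.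
Qed.

Lemma cancel2 a m X Y : a <= m -> 2^a*X = 2^a*Y %[mod 2^m] -> X = Y %[mod 2^(m-a)].
Proof.
move=> Ham; rewrite -(subnKC Ham) expnD -!muln_modr => /eqP.
by rewrite eqn_pmul2l ?expn_gt0 // addKn => /eqP.
Qed.

Lemma aux a b X Y m : a < m -> a < b -> odd X -> 2^a*X = 2^b*Y %[mod 2^m] -> False.
Proof.
move=> Ham Hab HX.
rewrite -(subnKC (ltnW Hab)) expnD -mulnA => /cancel2 => /(_ (ltnW Ham)) Hc.
have H2 : 2 %| 2 ^ (m - a).
  by rewrite -{1}(expn1 2) dvdn_Pexp2l //; lia.
have := congr1 (modn^~ 2) Hc; rewrite /= !modn_dvdm // !modn2 oddM oddX HX.
by have -> : (b - a == 0) = false by lia.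
Qed.

Lemma key x y m j : size x = size y -> all (fun k => 0 < k) x -> all (fun k=>0<k) y ->
  carry x = carry y %[mod 2^m] -> j < size x -> sumn (take j x) < m -> take j x = take j y.
Proof.
elim: x y m j => [|a x IH] [|b y] m [|j] //= [Hs] /andP[Ha Hx] /andP[Hb Hy] Hc Hj Hsum.
have xn : x != [::] by apply/eqP => E; rewrite E in Hj.
have yn : y != [::] by apply/eqP => E; rewrite Hs E in Hj.
move: Hc; rewrite !carry_cons Hs => /eqP; rewrite eqn_modDl => /eqP Hc.
have Hab : a = b.
  case: (ltngtP a b) => // H.
  - exfalso; apply: (@aux a b (carry x) (carry y) m) => //; [lia | exact: carry_odd].
  - exfalso; apply: (@aux b a (carry y) (carry x) m) => //; [lia | exact: carry_odd].
subst b; congr (_ :: _); apply: (IH y (m - a)) => //.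
- apply: cancel2 Hc; lia.
- lia.
Qed.

Lemma nth_rot' (s : seq nat) n i : n <= size s -> i < size s ->
  nth 0 (rot n s) i = nth 0 s ((i + n) %% size s).
Proof.
move=> Hn Hi; rewrite /rot nth_cat size_drop; case: ltnP => H.
  by rewrite nth_drop modn_small; [congr nth; lia | lia].
rewrite nth_take; last by lia.
have -> : i + n = (i - (size s - n)) + size s by lia.
by rewrite modnDr modn_small //; lia.
Qed.

Lemma eq_last (x y : seq nat) : size x = size y -> 0 < size x ->
  take (size x).-1 x = take (size x).-1 y -> sumn x = sumn y -> x = y.
Proof.
move=> Hs H0 Ht Hsum.
have Ex := cat_take_drop (size x).-1 x; have Ey := cat_take_drop (size x).-1 y.
rewrite (drop_nth 0) ?drop_oversize in Ex; try lia.
rewrite (drop_nth 0) ?drop_oversize in Ey; try lia.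
rewrite -Ex -Ey Ht; congr (_ ++ [:: _]).
move: Hsum; rewrite -{1}Ex -{1}Ey !sumn_cat Ht /=.
lia.
Qed.

Theorem mainTheorem19 (sigma : seq nat) (s m r : nat) :
  all (fun k => 0 < k) sigma ->
  1 <= s <= size sigma - 1 ->
  1 <= m ->
  v2_ge ((carry (rot s sigma))%:Z - (carry sigma)%:Z)%R m ->
  r <= size sigma ->
  \sum_(j < r) nth 0 sigma j < m ->
  (forall r', r' <= size sigma -> \sum_(j < r') nth 0 sigma j < m -> r' <= r) ->
  forall j, j < r -> nth 0 sigma j = nth 0 sigma ((j + s) %% size sigma).
Proof.
move=> Hpos /andP[Hs1 Hs2] Hm Hv Hr Hsum Hmax j Hj.
have Hc : carry (rot s sigma) = carry sigma %[mod 2^m].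
  case: Hv => [/eqP|Hl].
    by rewrite GRing.subr_eq0 => /eqP [->].
  have Hd : 2^m %| `|carry (rot s sigma) - carry sigma|.
    case E: (`|carry (rot s sigma) - carry sigma| == 0); first by move/eqP: E => ->.
    rewrite pfactor_dvdn. done. done. by rewrite lt0n E.
  case: (leqP (carry sigma) (carry (rot s sigma))) => H.
    apply/eqP; rewrite eqn_mod_dvd. rewrite -distnEl. done. done. done.
  apply/esym/eqP; rewrite eqn_mod_dvd; last exact: ltnW.
  rewrite -distnEr; last exact: ltnW.
  done.
rewrite sum_take in Hsum.
have Hpr : all (fun k => 0 < k) (rot s sigma) by rewrite /rot all_cat andbC -all_cat cat_take_drop.
have Hsz : size sigma = size (rot s sigma) by rewrite size_rot.
rewrite -nth_rot'; [|lia|lia].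
case: (ltnP r (size sigma)) => Hrl.
  have Ht := @key sigma (rot s sigma) m r Hsz Hpos Hpr (esym Hc) Hrl Hsum.
  by rewrite -(nth_take 0 Hj) Ht nth_take.
have Er : r = size sigma by lia.
suff -> : rot s sigma = sigma by [].
apply: esym; apply: eq_last.
- exact: Hsz.
- lia.
- apply: key.
  + exact: Hsz.
  + exact: Hpos.
  + exact: Hpr.
  + exact: esym Hc.
  + lia.
  + apply: leq_ltn_trans Hsum; rewrite Er.
    by rewrite take_size -[X in _ <= sumn X](cat_take_drop (size sigma).-1 sigma) sumn_cat leq_addr.
- by rewrite sumn_rot.
Qed.
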